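(* Let $\mathcal G=(\mathcal N,E)$ be an undirected graph on $N$ nodes with adjacency-type matrix $A$ (defined in the context), and let $x^\star$ be any solution of the fractional dominating set linear program $$\min_{x\in\mathbb R^N}\mathbf 1^\top x\quad\text{s.t.}\quad Ax\ge\mathbf 1,\ x\ge 0.$$ Run Algorithm 1 (described in the context) with an arbitrary $\delta>0$ and $\alpha=\frac{\delta}{2(d_{\max}+1)^2}$. Then for every $k=0,1,2,\dots$ the iterate $x^{(k)}=(x^{(k)}_1,\dots,x^{(k)}_N)^\top$ is feasible for this linear program (i.e. $Ax^{(k)}\ge\mathbf 1$ and $x^{(k)}\ge 0$), and $$\frac{\mathbf 1^\top x^{(k)}-\mathbf 1^\top x^\star}{\mathbf 1^\top x^\star}\le 32(d_{\max}+1)^3\Big(1+\frac1\delta\Big)\frac{1}{(k+1)^2}+\frac{\delta}{2}.$$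
   Context: $A$ is the $N\times N$ symmetric matrix with $A_{ii}=1$ for all $i$ and, for $i\ne j$, $A_{ij}=1$ if $\{i,j\}\in E$, $A_{ij}=0$ otherwise. $\Omega_i$ is the closed one-hop neighborhood of node $i$ (its neighbors together with $i$). $d_{\max}$ is the maximal degree of $\mathcal G$, where the degree of $i$ is its number of neighbors excluding $i$, i.e. $|\Omega_i|-1$. $\mathbf 1$ is the all-ones vector, $[c]_+=\max\{0,c\}$, and $\mathcal P_{[0,1]}(c)=\min\{1,\max\{0,c\}\}$. Algorithm 1: initialize $\lambda_i^{(0)}=0$ and $z_i^{(-1)}=0$ for all $i$ (the value of $\overline x_j^{(-1)}$ is irrelevant since it is multiplied by $0$). For $k=0,1,2,\dots$, each node $i$ computes $$\widehat x_i^{(k)}=\mathcal P_{[0,1]}\Big(\tfrac1\delta\big(\textstyle\sum_{j\in\Omega_i}\lambda_j^{(k)}-1\big)\Big),$$ and then $$z_i^{(k)}=z_i^{(k-1)}+\tfrac{k+1}{2}\Big(1-\textstyle\sum_{j\in\Omega_i}\widehat x_j^{(k)}\Big),\qquad \mu_i^{(k)}=\Big[\lambda_i^{(k)}+\alpha\big(1-\textstyle\sum_{j\in\Omega_i}\widehat x_j^{(k)}\big)\Big]_+,$$ $$\lambda_i^{(k+1)}=\tfrac{k+1}{k+3}\mu_i^{(k)}+\tfrac{2}{k+3}\,\alpha\,[z_i^{(k)}]_+,\qquad \overline x_j^{(k)}=\tfrac{k}{k+2}\overline x_j^{(k-1)}+\tfrac{2}{k+2}\widehat x_j^{(k)},$$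 $$x_i^{(k)}=\overline x_i^{(k)}+\Big[1-\textstyle\sum_{j\in\Omega_i}\overline x_j^{(k)}\Big]_+ .$$ *)

(* Defs.v *)
From mathcomp Require Import all_boot all_order all_algebra.
Set Implicit Arguments. Unset Strict Implicit. Unset Printing Implicit Defensive.
Import Order.TTheory GRing.Theory Num.Theory.
Local Open Scope ring_scope.

Section Defs.
Variable R : realFieldType.
Variable N : nat.

Definition simple_graph (e : rel 'I_N) : Prop :=
  (forall i j, e i j = e j i) /\ (forall i, ~~ e i i).

Definition Omega (e : rel 'I_N) (i : 'I_N) : {set 'I_N} :=
  [set j | (j == i) || e i j].

Definition dmax (e : rel 'I_N) : nat := \max_(i : 'I_N) (#|Omega e i|).-1.

Definition adjA (e : rel 'I_N) : 'M[R]_N :=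
  \matrix_(i, j) (if (i == j) || e i j then 1 else 0).

Definition lp_feasible (e : rel 'I_N) (x : 'I_N -> R) : Prop :=
  (forall i, 1 <= \sum_(j < N) adjA e i j * x j) /\ (forall i, 0 <= x i).

Definition lp_cost (x : 'I_N -> R) : R := \sum_(i < N) x i.

Definition lp_optimal (e : rel 'I_N) (x : 'I_N -> R) : Prop :=
  lp_feasible e x /\ forall y, lp_feasible e y -> lp_cost x <= lp_cost y.

Definition pos (c : R) : R := Num.max 0 c.
Definition proj01 (c : R) : R := Num.min 1 (Num.max 0 c).

(* state at the beginning of iteration k: (lambda^(k), z^(k-1), xbar^(k-1)) *)
Record alg_state := AlgState {
  st_lambda : 'I_N -> R;
  st_z : 'I_N -> R;
  st_xbar : 'I_N -> R }.

Definition nsum (e : rel 'I_N) (v : 'I_N -> R) (i : 'I_N) : R :=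
  \sum_(j in Omega e i) v j.

Definition xhat (e : rel 'I_N) (delta : R) (lam : 'I_N -> R) (i : 'I_N) : R :=
  proj01 (delta^-1 * (nsum e lam i - 1)).

Definition alg_step (e : rel 'I_N) (delta alpha : R) (k : nat) (s : alg_state)
  : alg_state :=
  let xh := xhat e delta (st_lambda s) in
  let z' := fun i => st_z s i + (k.+1)%:R / 2 * (1 - nsum e xh i) in
  let mu := fun i => pos (st_lambda s i + alpha * (1 - nsum e xh i)) in
  let lam' := fun i => (k.+1)%:R / (k.+3)%:R * mu i
                       + 2 / (k.+3)%:R * (alpha * pos (z' i)) in
  let xb' := fun j => k%:R / (k.+2)%:R * st_xbar s j + 2 / (k.+2)%:R * xh j in
  AlgState lam' z' xb'.

(* lambda^(0) = 0, z^(-1) = 0, xbar^(-1) irrelevant (set to 0) *)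
Fixpoint alg_state_at (e : rel 'I_N) (delta alpha : R) (k : nat) : alg_state :=
  match k with
  | 0 => AlgState (fun _ => 0) (fun _ => 0) (fun _ => 0)
  | k'.+1 => alg_step e delta alpha k' (alg_state_at e delta alpha k')
  end.

Definition xbar (e : rel 'I_N) (delta alpha : R) (k : nat) : 'I_N -> R :=
  st_xbar (alg_state_at e delta alpha k.+1).

Definition alg_x (e : rel 'I_N) (delta alpha : R) (k : nat) (i : 'I_N) : R :=
  xbar e delta alpha k i + pos (1 - nsum e (xbar e delta alpha k) i).

End Defs.

(* Main.v *)
Require Import Defs.
From mathcomp Require Import all_boot all_order all_algebra.
From mathcomp Require Import ring lra.
Import Order.TTheory GRing.Theory Num.Theory.
Local Open Scope ring_scope.

Lemma proj01_scalar (R : realFieldType) (d c s : R) : 0 < d -> 0 <= s <= 1 ->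
  d/2 * (s - proj01 c)^+2 <= (s + d/2 * s^+2 - s * (1 + d * c)) - (proj01 c + d/2 * (proj01 c)^+2 - proj01 c * (1 + d*c)).
Proof.
move=> dp /andP[s0 s1]; set t := proj01 c.
have ->: (s + d/2 * s^+2 - s * (1 + d * c)) - (t + d/2 * t^+2 - t * (1 + d*c))
   = d/2 * (s-t)^+2 + d * ((s - t) * (t - c)) by field.
rewrite lerDl; apply: mulr_ge0; first exact: ltW.
rewrite /t /proj01.
case: (leP c 0) => hc.
  case: (leP 1 0) => h10; first by lra.
  nra.
case: (leP c 1) => h1; nra.
Qed.

Lemma proj01_box (R : realFieldType) (c : R) : 0 <= proj01 c <= 1.
Proof.
rewrite /proj01; apply/andP; split.
  by rewrite le_min ler01 le_max lexx.
by rewrite ge_min lexx.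
Qed.

Lemma pos_ge0 (R : realFieldType) (c : R) : 0 <= pos c.
Proof. by rewrite /pos le_max lexx. Qed.

Lemma pos_ge (R : realFieldType) (c : R) : c <= pos c.
Proof. by rewrite /pos le_max lexx orbT. Qed.

Lemma pos_mul (R : realFieldType) (c : R) : pos c * c = pos c ^+ 2.
Proof.
rewrite /pos; case: (leP c 0) => h.
  by rewrite mul0r expr2 mul0r.
by rewrite expr2.
Qed.

Lemma coord_max (R : realFieldType) (L l g y : R) : 0 < L -> 0 <= y ->
  g * (y - l) - L/2 * (y - l)^+2 <=
  g * (pos (l + g / L) - l) - L/2 * (pos (l + g/L) - l)^+2.
Proof.
move=> Lp y0; rewrite /pos.
case: (leP (l + g/L) 0) => h.
  have hg : g <= - L * l.
    have: (l + g/L) * L <= 0 by rewrite mulr_le0_ge0 // ltW.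
    by rewrite mulrDl mulfVK ?gt_eqF //; lra.
  nra.
have ->: l + g/L - l = g/L by ring.
have ->: g * (y - l) - L/2 * (y - l)^+2 = g^+2/(2*L) - L/2 * (y - l - g/L)^+2.
  by field; rewrite gt_eqF.
have ->: g * (g/L) - L/2 * (g/L)^+2 = g^+2/(2*L) by field; rewrite gt_eqF.
rewrite gerDl oppr_le0; apply: mulr_ge0; [lra | exact: sqr_ge0].
Qed.

Lemma coord_strong (R : realFieldType) (L Z y : R) : 0 < L -> 0 <= y ->
  y * Z - L/2 * y^+2 <= (pos (Z/L)) * Z - L/2 * (pos (Z/L))^+2 - L/2 * (y - pos (Z/L))^+2.
Proof.
move=> Lp y0; rewrite /pos.
case: (leP (Z/L) 0) => h.
  have hg : Z <= 0.
    have: (Z/L) * L <= 0 by rewrite mulr_le0_ge0 // ltW.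
    by rewrite mulfVK ?gt_eqF.
  nra.
have ->: y * Z - L/2 * y^+2 = Z^+2/(2*L) - L/2 * (y - Z/L)^+2.
  by field; rewrite gt_eqF.
have ->: Z/L * Z - L/2 * (Z/L)^+2 = Z^+2/(2*L) by field; rewrite gt_eqF.
lra.
Qed.

Set Implicit Arguments. Unset Strict Implicit.

Lemma sq_sum_le (R : realFieldType) (T : finType) (S : {pred T}) (h : T -> R) :
  (\sum_(j in S) h j)^+2 <= #|S|%:R * \sum_(j in S) h j ^+ 2.
Proof.
rewrite expr2 mulr_suml.
have H : forall j k, h j * h k <= (h j ^+2 + h k ^+ 2) / 2.
  move=> j k; rewrite -subr_ge0.
  have ->: (h j ^+2 + h k ^+ 2) / 2 - h j * h k = (h j - h k)^+2 / 2 by field.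
  by apply: divr_ge0; [exact: sqr_ge0 | lra].
apply: le_trans (_ : \sum_(j in S) \sum_(k in S) (h j ^+2 + h k ^+ 2) / 2 <= _).
  apply: ler_sum => j _; rewrite mulr_sumr; apply: ler_sum => k _; exact: H.
under eq_bigr => j _ do rewrite -mulr_suml big_split /= sumr_const.
rewrite -mulr_suml big_split /= sumr_const sumrMnl.
set s := \sum_(i in S) h i ^+ 2.
rewrite -[s *+ #|S|]mulr_natl le_eqVlt; apply/orP; left; apply/eqP; by field.
Qed.

Section G.
Variables (R : realFieldType) (N : nat) (e : rel 'I_N).
Hypothesis esym : forall i j, e i j = e j i.

Definition D1 : R := (dmax e)%:R + 1.

Lemma Omega_sym i j : (j \in Omega e i) = (i \in Omega e j).
Proof. by rewrite !inE eq_sym esym. Qed.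

Lemma Omega_self i : i \in Omega e i.
Proof. by rewrite inE eqxx. Qed.

Lemma card_Omega i : #|Omega e i|%:R <= D1.
Proof.
rewrite /D1 natr1 ler_nat.
have h1 : ((#|Omega e i|).-1 <= dmax e)%N.
  by rewrite /dmax; apply: (leq_bigmax i).
by rewrite (leq_trans (leqSpred _)) // ltnS.
Qed.

Lemma D1_ge1 : 1 <= D1.
Proof. by rewrite /D1 lerDr. Qed.

Lemma nsum_swap (u v : 'I_N -> R) :
  \sum_i u i * nsum e v i = \sum_i v i * nsum e u i.
Proof.
rewrite /nsum.
under eq_bigr do rewrite mulr_sumr big_mkcond /=.
rewrite exchange_big /=; apply: eq_big => // j _.
rewrite mulr_sumr [RHS]big_mkcond /=; apply: eq_bigr => i _.
by rewrite Omega_sym; case: ifP => //; rewrite mulrC.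
Qed.

Lemma nsum_lin (c d : R) (u w : 'I_N -> R) i :
  nsum e (fun j => c * u j + d * w j) i = c * nsum e u i + d * nsum e w i.
Proof. by rewrite /nsum big_split /= -!mulr_sumr. Qed.

Lemma nsum_ge0 (u : 'I_N -> R) i : (forall j, 0 <= u j) -> 0 <= nsum e u i.
Proof. by move=> h; apply: sumr_ge0 => j _. Qed.

Lemma nsum_ge_self (u : 'I_N -> R) i : (forall j, 0 <= u j) -> u i <= nsum e u i.
Proof.
move=> h; rewrite /nsum (bigD1 i) ?Omega_self //= lerDl.
by apply: sumr_ge0 => j _.
Qed.

Lemma normA (h : 'I_N -> R) :
  \sum_i (nsum e h i)^+2 <= D1^+2 * \sum_i h i ^+ 2.
Proof.
have D0 : 0 <= D1 by apply: le_trans D1_ge1.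
apply: le_trans (_ : \sum_i D1 * nsum e (fun j => h j ^+ 2) i <= _).
  apply: ler_sum => i _.
  apply: le_trans (@sq_sum_le R _ (Omega e i) h) _.
  apply: ler_wpM2r.
    by apply: sumr_ge0 => j _; exact: sqr_ge0.
  exact: card_Omega.
rewrite -mulr_sumr.
have -> : \sum_i nsum e (fun j => h j ^+ 2) i
        = \sum_i (fun _ => 1) i * nsum e (fun j => h j ^+ 2) i.
  by apply: eq_bigr => i _; rewrite mul1r.
rewrite nsum_swap expr2 -mulrA ler_wpM2l // mulr_sumr.
apply: ler_sum => i _; rewrite [X in _ <= X]mulrC; apply: ler_wpM2l; first exact: sqr_ge0.
by rewrite /nsum sumr_const -[X in X <= _](mulr_natl 1) mulr1; exact: card_Omega.
Qed.

End G.

Section A.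
Variables (R : realFieldType) (N : nat) (e : rel 'I_N).
Hypothesis esym : forall i j, e i j = e j i.
Variable delta : R.
Hypothesis dpos : 0 < delta.
Local Notation D := (@D1 R N e).

Definition alphaD : R := delta / (2 * D ^+ 2).
Definition cc : R := (2 * alphaD)^-1.

Lemma D1pos : 0 < D.
Proof. exact: lt_le_trans ltr01 (@D1_ge1 R N e). Qed.

Lemma alpha_pos : 0 < alphaD.
Proof. by rewrite /alphaD divr_gt0 // mulr_gt0 // exprn_gt0 // D1pos. Qed.

Lemma cc_eq : cc = D^+2 / delta.
Proof.
have h := D1pos; rewrite /cc /alphaD; field.
by rewrite !gt_eqF ?exprn_gt0.
Qed.

Lemma cc_pos : 0 < cc.
Proof. by rewrite /cc invr_gt0 mulr_gt0 // alpha_pos. Qed.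

Lemma cc_alpha : 2 * cc * alphaD = 1.
Proof. have h := alpha_pos; rewrite /cc; field; by rewrite gt_eqF. Qed.

Definition F (x : 'I_N -> R) : R := \sum_i (x i + delta/2 * x i ^+ 2).
Definition Phi (x l : 'I_N -> R) : R := F x + \sum_i l i * (1 - nsum e x i).
Definition box (x : 'I_N -> R) := forall i, 0 <= x i <= 1.
Definition xh (l : 'I_N -> R) := xhat e delta l.
Definition q (l : 'I_N -> R) : R := Phi (xh l) l.

Lemma xh_box l : box (xh l).
Proof. by move=> i; exact: proj01_box. Qed.

Lemma Phi_alt x l : Phi x l =
  \sum_i (x i + delta/2 * x i ^+ 2 - x i * nsum e l i) + \sum_i l i.
Proof.
rewrite /Phi /F.
have -> : \sum_i l i * (1 - nsum e x i) = \sum_i l i - \sum_i x i * nsum e l i.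
  rewrite -(nsum_swap esym) -sumrB; apply: eq_bigr => i _; ring.
rewrite sumrB; ring.
Qed.

Lemma strong l y : box y ->
  delta/2 * \sum_i (y i - xh l i)^+2 <= Phi y l - Phi (xh l) l.
Proof.
move=> By; rewrite !Phi_alt opprD addrACA subrr addr0 -sumrB mulr_sumr; apply: ler_sum => i _.
set c := delta^-1 * (nsum e l i - 1).
have hc : nsum e l i = 1 + delta * c by rewrite /c; field; rewrite gt_eqF.
rewrite hc; exact: proj01_scalar.
Qed.

Lemma q_min l y : box y -> q l <= Phi y l.
Proof.
move=> By; rewrite /q -subr_ge0; apply: le_trans _ (strong l By).
apply: mulr_ge0; first by apply: divr_ge0; [exact: ltW | lra].
by apply: sumr_ge0 => i _; exact: sqr_ge0.
Qed.

Lemma Phi_affine x l m :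
  Phi x m = Phi x l + \sum_i (m i - l i) * (1 - nsum e x i).
Proof. rewrite /Phi -addrA; congr (_ + _); rewrite -big_split /=; apply: eq_bigr => i _; ring. Qed.

Lemma nsumB (u w : 'I_N -> R) i : nsum e (fun j => u j - w j) i = nsum e u i - nsum e w i.
Proof. by rewrite /nsum sumrB. Qed.

Lemma ab_le a b : a * b <= delta/2 * a^+2 + b^+2 / (2 * delta).
Proof.
rewrite -subr_ge0.
have -> : delta/2 * a^+2 + b^+2 / (2 * delta) - a * b = delta/2 * (a - b/delta)^+2.
  by field; rewrite gt_eqF.
by apply: mulr_ge0; [apply: divr_ge0; [exact: ltW | lra] | exact: sqr_ge0].
Qed.

Lemma descent l m : Phi (xh l) m - cc * \sum_i (m i - l i)^+2 <= q m.
Proof.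
set x := xh l; set y := xh m.
have H1 := strong l (xh_box m); rewrite -/x -/y in H1.
rewrite /q -/y (Phi_affine y l m) (Phi_affine x l m).
set h := fun i => m i - l i.
have E : \sum_i h i * (1 - nsum e y i) - \sum_i h i * (1 - nsum e x i)
    = - \sum_i (y i - x i) * nsum e h i.
  rewrite -sumrB (nsum_swap esym (fun i => y i - x i) h) -sumrN.
  apply: eq_bigr => i _; rewrite nsumB; ring.
have H2 : \sum_i (y i - x i) * nsum e h i <=
    delta/2 * \sum_i (y i - x i)^+2 + (2 * delta)^-1 * \sum_i (nsum e h i)^+2.
  rewrite !mulr_sumr -big_split /=; apply: ler_sum => i _.
  by rewrite (mulrC (2 * delta)^-1); exact: ab_le.
have H3 := normA esym h.
have H4 : (2 * delta)^-1 * \sum_i (nsum e h i)^+2 <= cc * \sum_i h i ^+ 2.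
  apply: le_trans (_ : (2 * delta)^-1 * (D^+2 * \sum_i h i ^+ 2) <= _).
    by apply: ler_wpM2l => //; rewrite invr_ge0 mulr_ge0 // ltW.
  rewrite mulrA; apply: ler_wpM2r; first by apply: sumr_ge0 => i _; exact: sqr_ge0.
  rewrite cc_eq -subr_ge0.
  have -> : D ^+ 2 / delta - (2 * delta)^-1 * D ^+ 2 = D ^+ 2 / (2 * delta).
    by field; rewrite gt_eqF.
  by rewrite divr_ge0 ?sqr_ge0 // mulr_ge0 // ltW.
have -> : \sum_i (m i - l i) * (1 - nsum e x i) = \sum_i h i * (1 - nsum e x i) by [].
have -> : \sum_i (m i - l i) * (1 - nsum e y i) = \sum_i h i * (1 - nsum e y i) by [].
have -> : \sum_i (m i - l i)^+2 = \sum_i h i ^+ 2 by [].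
clear H3; move: H1 E H2 H4.
set s1 := \sum_i h i * (1 - nsum e y i).
set s2 := \sum_i h i * (1 - nsum e x i).
set s3 := \sum_i (y i - x i) * nsum e h i.
set s4 := \sum_i (y i - x i) ^+ 2.
set s5 := (2 * delta)^-1 * \sum_i (nsum e h i) ^+ 2.
set s6 := cc * \sum_i h i ^+ 2.
set s7 := delta / 2 * s4.
move=> *; lra.
Qed.

Definition muf (l : 'I_N -> R) (i : 'I_N) : R :=
  pos (l i + alphaD * (1 - nsum e (xh l) i)).

Lemma coord_max2 (l g y : R) : 0 <= y ->
  g * (y - l) - cc * (y - l)^+2 <=
  g * (pos (l + alphaD * g) - l) - cc * (pos (l + alphaD * g) - l)^+2.
Proof.
move=> y0; have ca := cc_alpha; have cp := cc_pos; have ap := alpha_pos.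
rewrite /pos; case: (leP (l + alphaD * g) 0) => h.
  have h1 : g + 2 * cc * l <= 0.
    have : 2 * cc * (l + alphaD * g) <= 0 by rewrite pmulr_rle0 // mulr_gt0.
    by rewrite mulrDr mulrA ca mul1r addrC.
  have h2 : 0 <= cc * y by rewrite mulr_ge0 // ltW.
  have h3 : y * (g - cc * y + 2 * cc * l) <= 0 by rewrite mulr_ge0_le0 //; lra.
  have -> : g * (y - l) - cc * (y - l)^+2 = y * (g - cc * y + 2 * cc * l) + (g * (0 - l) - cc * (0 - l)^+2) by ring.
  lra.
have -> : g * (y - l) - cc * (y - l)^+2 = alphaD * g^+2 / 2 - cc * (y - l - alphaD * g)^+2.
  rewrite /cc; field; by rewrite gt_eqF.
have -> : g * (l + alphaD * g - l) - cc * (l + alphaD * g - l)^+2 = alphaD * g^+2 / 2.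
  rewrite /cc; field; by rewrite gt_eqF.
rewrite gerDl oppr_le0; apply: mulr_ge0; [exact: ltW | exact: sqr_ge0].
Qed.

Lemma keyG l y : (forall i, 0 <= y i) ->
  Phi (xh l) y - cc * \sum_i (y i - l i)^+2 <= q (muf l).
Proof.
move=> y0; apply: le_trans (descent l (muf l)).
rewrite (Phi_affine (xh l) l y) (Phi_affine (xh l) l (muf l)) -!addrA lerD2l !mulr_sumr -!sumrB.
rewrite lerD2l; apply: ler_sum => i _; rewrite /muf.
rewrite !(mulrC (_ - l i)); exact: coord_max2.
Qed.


Definition st k := alg_state_at e delta alphaD k.
Definition lam k := st_lambda (st k).
Definition X k := xh (lam k).
Definition g k i := 1 - nsum e (X k) i.
Definition Z k := st_z (st k.+1).
Definition xb k := st_xbar (st k.+1).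
Definition Ak (k : nat) : R := (k.+1)%:R * (k.+2)%:R / 4.
Definition ak (k : nat) : R := (k.+1)%:R / 2.

Lemma lam0 i : lam 0 i = 0.
Proof. by []. Qed.

Lemma lamS k i : lam k.+1 i =
  (k.+1)%:R / (k.+3)%:R * muf (lam k) i + 2 / (k.+3)%:R * (alphaD * pos (Z k i)).
Proof. by []. Qed.

Lemma Z0 i : Z 0 i = 0 + 1%:R / 2 * g 0 i.
Proof. by []. Qed.

Lemma ZS k i : Z k.+1 i = Z k i + (k.+2)%:R / 2 * g k.+1 i.
Proof. by []. Qed.

Lemma xb0 : xb 0 = fun j => 0%:R / 2%:R * 0 + 2 / 2%:R * X 0 j.
Proof. by []. Qed.

Lemma xbS k : xb k.+1 = fun j => (k.+1)%:R / (k.+3)%:R * xb k j + 2 / (k.+3)%:R * X k.+1 j.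
Proof. by []. Qed.


Lemma coefs k :
  [/\ (k.+1)%:R / (k.+3)%:R = Ak k / Ak k.+1,
      2 / (k.+3)%:R = ak k.+1 / Ak k.+1,
      Ak k + ak k.+1 = Ak k.+1,
      ak k.+1 ^+ 2 <= Ak k.+1 &
      0 < Ak k].
Proof.
have K0 : 0 <= k%:R :> R by exact: ler0n.
rewrite /Ak /ak -!natr1.
split.
- field; apply/andP; split; rewrite gt_eqF //; lra.
- field; apply/andP; split; rewrite gt_eqF //; lra.
- by field.
- rewrite -subr_ge0 [X in 0 <= X](_ : _ = (k%:R + 1 + 1) / 4); last by field.
  by apply: divr_ge0; lra.
- by apply: divr_gt0; [apply: mulr_gt0 | ]; lra.
Qed.


Definition psi k (l : 'I_N -> R) : R :=
  \sum_(m < k.+1) ak m * F (X m) + \sum_i (l i * Z k i - cc * l i ^+ 2).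

Lemma muf_ge0 l i : 0 <= muf l i.
Proof. exact: pos_ge0. Qed.

Lemma coord_strong2 (Zv y : R) : 0 <= y ->
  y * Zv - cc * y^+2 <= (alphaD * pos Zv) * Zv - cc * (alphaD * pos Zv)^+2
                       - cc * (y - alphaD * pos Zv)^+2.
Proof.
move=> y0; have ap := alpha_pos; have cp := cc_pos.
rewrite /pos; case: (leP Zv 0) => h.
  rewrite !mulr0 mul0r expr0n /= mulr0 !subr0 lerD2r.
  by rewrite mulr_ge0_le0.
rewrite le_eqVlt; apply/orP; left; apply/eqP; rewrite /cc; field.
by rewrite gt_eqF.
Qed.

Lemma F_ge_cost x : (forall i, 0 <= x i) -> lp_cost x <= F x.
Proof.
move=> x0; rewrite /lp_cost /F; apply: ler_sum => i _; rewrite lerDl.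
by apply: mulr_ge0; [apply: divr_ge0; [exact: ltW | lra] | exact: sqr_ge0].
Qed.

Lemma inv0 l : (forall i, 0 <= l i) -> psi 0 l <= Ak 0 * q (muf (lam 0)).
Proof.
move=> l0; have h1 := keyG (lam 0) l0.
have A0 : 0 <= Ak 0 by rewrite /Ak; apply: divr_ge0; [apply: mulr_ge0 |]; lra.
apply: le_trans (ler_wpM2l A0 h1).
rewrite /psi /Phi big_ord1 mulrBr mulrDr !mulr_sumr.
have -> : ak 0 = Ak 0 by rewrite /ak /Ak; field.
rewrite -addrA lerD2l -sumrB; apply: ler_sum => i _.
rewrite Z0 lam0 -subr_ge0.
rewrite [X in 0 <= X](_ : _ = cc * l i ^+ 2 / 2); last by rewrite /Ak /g /X; field.
apply: divr_ge0; last lra.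
by apply: mulr_ge0; [exact: ltW cc_pos | exact: sqr_ge0].
Qed.


Lemma psiS k l : psi k.+1 l = psi k l + ak k.+1 * Phi (X k.+1) l.
Proof.
rewrite /psi /Phi big_ord_recr /=.
have E : \sum_i (l i * Z k.+1 i - cc * l i ^+ 2) =
   \sum_i (l i * Z k i - cc * l i ^+ 2) + ak k.+1 * \sum_i l i * (1 - nsum e (X k.+1) i).
  rewrite mulr_sumr -big_split /=; apply: eq_bigr => i _; rewrite ZS /g /ak; ring.
rewrite E; ring.
Qed.

Lemma invS k : (forall l, (forall i, 0 <= l i) -> psi k l <= Ak k * q (muf (lam k))) ->
  forall l, (forall i, 0 <= l i) -> psi k.+1 l <= Ak k.+1 * q (muf (lam k.+1)).
Proof.
move=> IH l l0.
have [c1 c2 c3 c4 c5] := coefs k.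
set A := Ak k in c1 c3 c5 IH *; set a := ak k.+1 in c2 c3 c4 *.
have ap : 0 < a by rewrite /a /ak; apply: divr_gt0; [rewrite ltr0n | lra].
have Aap : 0 < A + a by rewrite addr_gt0.
rewrite -c3.
pose zeta := fun i => alphaD * pos (Z k i).
have z0 : forall i, 0 <= zeta i.
  by move=> i; apply: mulr_ge0; [exact: ltW alpha_pos | exact: pos_ge0].
set M := muf (lam k).
set x := X k.+1.
pose y := fun i => (A * M i + a * l i) / (A + a).
have y0 : forall i, 0 <= y i.
  move=> i; apply: divr_ge0; last exact: ltW.
  by apply: addr_ge0; apply: mulr_ge0; rewrite ?muf_ge0 ?l0 // ltW.
set lam' := lam k.+1.
have hlam : forall i, lam' i = (A * M i + a * zeta i) / (A + a).
  move=> i; rewrite /lam' lamS c1 c2 -c3 -/M /zeta; field; by rewrite gt_eqF.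
have s1 : psi k l <= psi k zeta - cc * \sum_i (l i - zeta i)^+2.
  rewrite /psi -addrA lerD2l mulr_sumr -sumrB; apply: ler_sum => i _.
  exact: coord_strong2.
have s2 : psi k zeta <= A * Phi x M.
  apply: le_trans (IH zeta z0) _; apply: ler_wpM2l; first exact: ltW.
  exact: q_min (xh_box _).
have s5 : A * Phi x M + a * Phi x l = (A + a) * Phi x y.
  rewrite /Phi !mulrDr.
  have -> : (A + a) * \sum_i y i * (1 - nsum e x i) =
     A * \sum_i M i * (1 - nsum e x i) + a * \sum_i l i * (1 - nsum e x i).
    rewrite !mulr_sumr -big_split /=; apply: eq_bigr => i _; rewrite /y; field; by rewrite gt_eqF.
  ring.
have s6 : cc * ((A + a) * \sum_i (y i - lam' i)^+2) <= cc * \sum_i (l i - zeta i)^+2.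
  apply: ler_wpM2l; first exact: ltW cc_pos.
  rewrite mulr_sumr; apply: ler_sum => i _.
  have -> : y i - lam' i = a / (A + a) * (l i - zeta i).
    rewrite hlam /y; field; by rewrite gt_eqF.
  rewrite exprMn mulrA -[X in _ <= X]mul1r; apply: ler_wpM2r; first exact: sqr_ge0.
  rewrite expr_div_n mulrA ler_pdivrMr ?exprn_gt0 // mul1r.
  by rewrite [X in _ <= X]expr2 ler_pM2l // c3.
have s7 := keyG lam' y0.
apply: le_trans (ler_wpM2l (ltW Aap) s7).
rewrite psiS -/A -/a -/x.
apply: le_trans (_ : psi k zeta - cc * \sum_i (l i - zeta i)^+2 + a * Phi x l <= _).
  by rewrite lerD2r.
apply: le_trans (_ : A * Phi x M - cc * \sum_i (l i - zeta i)^+2 + a * Phi x l <= _).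
  by rewrite lerD2r lerD2r.
rewrite addrAC s5 mulrBr lerD2l lerN2 mulrCA; exact: s6.
Qed.


Lemma inv k : forall l, (forall i, 0 <= l i) -> psi k l <= Ak k * q (muf (lam k)).
Proof. elim: k => [|k IH]; [exact: inv0 | exact: invS]. Qed.

Lemma cost_lin (c d : R) (u w : 'I_N -> R) :
  lp_cost (fun j => c * u j + d * w j) = c * lp_cost u + d * lp_cost w.
Proof. by rewrite /lp_cost big_split /= -!mulr_sumr. Qed.

Lemma R1 k i : Z k i = Ak k * (1 - nsum e (xb k) i).
Proof.
elim: k i => [|k IH] i.
  rewrite Z0 xb0 (nsum_lin e (0%:R/2%:R) (2/2%:R) (fun _ => 0) (X 0)) /g /Ak; by field.
have [c1 c2 c3 c4 c5] := coefs k.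
have [_ _ _ _ c6] := coefs k.+1.
rewrite ZS IH xbS (nsum_lin e _ _ (xb k) (X k.+1)) c1 c2 /g.
rewrite -[(k.+2)%:R / 2]/(ak k.+1) -c3.
rewrite -c3 in c6.
field; by rewrite gt_eqF.
Qed.

Lemma R2 k : Ak k * lp_cost (xb k) <= \sum_(m < k.+1) ak m * F (X m).
Proof.
have Xpos : forall m j, 0 <= X m j by move=> m j; have /andP[] := xh_box (lam m) j.
elim: k => [|k IH].
  rewrite big_ord1 xb0 cost_lin.
  have -> : ak 0 = Ak 0 by rewrite /ak /Ak; field.
  rewrite (_ : lp_cost (fun _ => 0) = 0); last by rewrite /lp_cost big1.
  rewrite mulr0 add0r divff ?mul1r ?pnatr_eq0 //.
  apply: ler_wpM2l; first by rewrite /Ak divr_ge0 // mulr_ge0.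
  exact: F_ge_cost.
have [c1 c2 c3 c4 c5] := coefs k.
have [_ _ _ _ c6] := coefs k.+1.
rewrite big_ord_recr /= xbS cost_lin c1 c2 mulrDr.
have -> : Ak k.+1 * (Ak k / Ak k.+1 * lp_cost (xb k)) = Ak k * lp_cost (xb k).
  by field; rewrite gt_eqF.
have -> : Ak k.+1 * (ak k.+1 / Ak k.+1 * lp_cost (X k.+1)) = ak k.+1 * lp_cost (X k.+1).
  by field; rewrite gt_eqF.
apply: lerD => //; apply: ler_wpM2l; first by rewrite /ak divr_ge0.
exact: F_ge_cost.
Qed.



Lemma xb_ge0 k j : 0 <= xb k j.
Proof.
have Xpos : forall m j, 0 <= X m j by move=> m j'; have /andP[] := xh_box (lam m) j'.
elim: k j => [|k IH] j.
  by rewrite xb0 /= mulr0 add0r mulr_ge0 // divr_ge0.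
rewrite xbS /=; apply: addr_ge0; apply: mulr_ge0; rewrite ?divr_ge0 //.
Qed.

Lemma main_bound k (y : 'I_N -> R) : box y -> (forall i, 1 <= nsum e y i) ->
  lp_cost (xb k) + Ak k * alphaD / 2 * \sum_i (pos (1 - nsum e (xb k) i))^+2 <= F y.
Proof.
move=> By Hy.
have [_ _ _ _ A0] := coefs k.
pose v := fun i => pos (1 - nsum e (xb k) i).
pose t := Ak k * alphaD.
pose lm := fun i => t * v i.
have lm0 : forall i, 0 <= lm i.
  by move=> i; rewrite mulr_ge0 ?pos_ge0 // mulr_ge0 // ltW // alpha_pos.
have H := inv k lm0.
have H2 : q (muf (lam k)) <= F y.
  apply: le_trans (q_min _ By) _.
  rewrite /Phi gerDl; apply: sumr_le0 => i _; apply: mulr_ge0_le0; first exact: muf_ge0.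
  by rewrite subr_le0.
have H3 : psi k lm <= Ak k * F y.
  apply: le_trans H _; apply: ler_wpM2l => //; exact: ltW.
rewrite -(ler_pM2l A0); apply: le_trans H3.
rewrite /psi mulrDr; apply: lerD; first exact: R2.
rewrite mulr_sumr mulr_sumr le_eqVlt; apply/orP; left; apply/eqP; apply: eq_bigr => i _.
rewrite R1 /lm.
have hv : v i * (1 - nsum e (xb k) i) = v i ^+ 2 by exact: pos_mul.
rewrite /cc /t -/(v i).
set w := 1 - nsum e (xb k) i.
rewrite -/w in hv.
have -> : Ak k * alphaD * v i * (Ak k * w) = Ak k * Ak k * alphaD * (v i * w) by ring.
rewrite hv; field.
by rewrite gt_eqF // alpha_pos.
Qed.

End A.

Lemma arith (R : realFieldType) (c n X d D K : R) : 0 < d -> 1 <= D -> 1 <= K -> 0 <= c -> n <= D * c ->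
  X <= (1 + d/2) * c + n / (2 * (K * (K+1) / 4 * (d / (2 * D^+2)))) ->
  (X - c)/c <= 32 * D^+3 * (1 + d^-1) / K^+2 + d/2.
Proof.
move=> dp D1 K1 c0 hn hX.
have Dp : 0 < D by lra.
have Kp : 0 < K by lra.
have K1p : 0 < K + 1 by lra.
have di : 0 <= d^-1 by rewrite invr_ge0 ltW.
have R0 : 0 <= 32 * D^+3 * (1 + d^-1) / K^+2.
  apply: divr_ge0; last by rewrite exprn_ge0 // ltW.
  apply: mulr_ge0; [apply: mulr_ge0; [lra | by rewrite exprn_ge0 // ltW] | lra].
have [->|cp] := eqVneq c 0.
  by rewrite invr0 mulr0 addr_ge0 // divr_ge0 // ltW.
have cp' : 0 < c by rewrite lt_def cp c0.
have eB : n / (2 * (K * (K+1) / 4 * (d / (2 * D^+2)))) = n * (4 * D^+2 / (K*(K+1)*d)).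
  by field; rewrite !gt_eqF ?exprn_gt0.
have Q0 : 0 <= 4 * D^+2 / (K*(K+1)*d).
  apply: divr_ge0; first by apply: mulr_ge0; [lra | rewrite exprn_ge0 // ltW].
  by rewrite !mulr_ge0 // ltW.
have B1 : n * (4 * D^+2 / (K*(K+1)*d)) <= D * c * (4 * D^+2 / (K*(K+1)*d)).
  exact: ler_wpM2r.
have P0 : 0 <= D^+3 * c / K^+2.
  by apply: divr_ge0; [apply: mulr_ge0 => //; rewrite exprn_ge0 // ltW | rewrite exprn_ge0 // ltW].
have B2 : D * c * (4 * D^+2 / (K*(K+1)*d)) <= 32 * D^+3 * (1 + d^-1) / K^+2 * c.
  rewrite (_ : D * c * (4 * D^+2 / (K*(K+1)*d)) = (D^+3 * c / K^+2) * (4 * K / ((K+1) * d))); last first.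
    by field; rewrite !gt_eqF.
  rewrite (_ : 32 * D^+3 * (1 + d^-1) / K^+2 * c = (D^+3 * c / K^+2) * (32 * (1 + d^-1))); last first.
    by field; rewrite !gt_eqF.
  apply: ler_wpM2l => //.
  rewrite (_ : 4 * K / ((K+1) * d) = 4 * d^-1 - 4 / ((K+1) * d)); last first.
    by field; rewrite !gt_eqF.
  have : 0 <= 4 / ((K+1) * d) by apply: divr_ge0; [lra | rewrite mulr_ge0 // ltW].
  lra.
rewrite ler_pdivrMr // mulrDl.
move: hX; rewrite eB => hX.
lra.
Qed.

Lemma proj01_facts (R : realFieldType) (c : R) : 0 <= c ->
  [/\ proj01 c <= c, (1 <= c -> proj01 c = 1) & (c < 1 -> proj01 c = c)].
Proof.
move=> c0; rewrite /proj01.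
case: (leP c 0) => h0.
  have -> : c = 0 by apply/eqP; rewrite eq_le h0 c0.
  case: (leP 1 0) => h1; first lra.
  split => //; lra.
case: (leP 1 c) => h1; split => //; lra.
Qed.

Lemma nsum_ge_mem (R : realFieldType) N (e : rel 'I_N) (u : 'I_N -> R) i j :
  j \in Omega e i -> (forall j, 0 <= u j) -> u j <= nsum e u i.
Proof.
move=> jin h; rewrite /nsum (bigD1 j) //= lerDl.
by apply: sumr_ge0 => k _.
Qed.

Theorem theorem1 (R : realFieldType) (N : nat) (e : rel 'I_N)
  (xs : 'I_N -> R) (delta : R) :
  simple_graph e ->
  lp_optimal e xs ->
  0 < delta ->
  let alpha := delta / (2 * ((dmax e)%:R + 1) ^+ 2) in
  forall k : nat,
    lp_feasible e (alg_x e delta alpha k) /\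
    (lp_cost (alg_x e delta alpha k) - lp_cost xs) / lp_cost xs
      <= 32 * ((dmax e)%:R + 1) ^+ 3 * (1 + delta^-1) / ((k%:R + 1) ^+ 2)
         + delta / 2.
Proof.
move=> [esym _] [[Hf Hn] _] dpos alpha k.
have eA : forall (x : 'I_N -> R) i, \sum_(j < N) adjA R e i j * x j = nsum e x i.
  move=> x i; rewrite /nsum [RHS]big_mkcond /=; apply: eq_bigr => j _.
  by rewrite mxE inE eq_sym; case: ifP => _; [rewrite mul1r | rewrite mul0r].
have eX : alg_x e delta alpha k =
   fun i => xb e delta k i + pos (1 - nsum e (xb e delta k) i) by [].
pose v := fun i => pos (1 - nsum e (xb e delta k) i).
have v0 : forall i, 0 <= v i by move=> i; exact: pos_ge0.
split.
  split => i; rewrite ?eA eX; last by rewrite addr_ge0 ?xb_ge0 ?pos_ge0.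
  rewrite /nsum big_split /= -/(nsum e (xb e delta k) i) -/(nsum e v i).
  have := nsum_ge_mem (Omega_self e i) v0.
  have := @pos_ge R (1 - nsum e (xb e delta k) i).
  rewrite -/(v i); lra.
pose y := fun i => proj01 (xs i).
have By : box y by move=> i; exact: proj01_box.
have Hy : forall i, 1 <= nsum e y i.
  move=> i; case: (boolP [exists j in Omega e i, 1 <= xs j]).
    move/existsP => [j /andP [jin h1]].
    have y0 : forall j, 0 <= y j by move=> j'; have /andP[] := By j'.
    apply: le_trans (nsum_ge_mem jin y0).
    by have [_ h _] := proj01_facts (Hn j); rewrite /y h.
  rewrite negb_exists => /forallP hall.
  have Hf' : 1 <= nsum e xs i by rewrite -eA.
  apply: le_trans Hf' _.
  rewrite le_eqVlt; apply/orP; left; apply/eqP; apply: eq_bigr => j jin.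
  have := hall j; rewrite jin /= -ltNge => hj.
  by have [_ _ h] := proj01_facts (Hn j); rewrite /y h.
have MB := main_bound esym dpos k By Hy.
have FY : F delta y <= (1 + delta/2) * lp_cost xs.
  rewrite /F /lp_cost mulr_sumr; apply: ler_sum => i _.
  have [h1 _ _] := proj01_facts (Hn i).
  have /andP[y0 y1] := By i.
  have : y i ^+ 2 <= y i by rewrite expr2 ler_piMr.
  rewrite -/(y i) in h1.
  have : 0 <= delta / 2 by rewrite divr_ge0 // ltW.
  set z := delta / 2; move=> z0 hsq.
  have : z * y i ^+ 2 <= z * xs i by rewrite ler_wpM2l //; apply: le_trans hsq h1.
  lra.
have NB : N%:R <= D1 R e * lp_cost xs.
  have -> : N%:R = \sum_(i < N) (1 : R) by rewrite sumr_const card_ord.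
  apply: le_trans (_ : \sum_(i < N) nsum e xs i <= _).
    by apply: ler_sum => i _; rewrite -eA.
  have -> : \sum_(i < N) nsum e xs i = \sum_(i < N) (fun _ => 1) i * nsum e xs i.
    by apply: eq_bigr => i _; rewrite mul1r.
  rewrite nsum_swap // /lp_cost mulr_sumr; apply: ler_sum => i _.
  rewrite mulrC; apply: ler_wpM2r => //.
  by rewrite /nsum sumr_const -[X in X <= _](mulr_natl 1) mulr1; exact: card_Omega.
set s := Ak R k * alphaD e delta / 2.
have sp : 0 < s.
  have [_ _ _ _ A0] := coefs R k.
  by rewrite /s divr_gt0 // mulr_gt0 // alpha_pos.
have SV : \sum_i v i <= s * \sum_i v i ^+ 2 + N%:R / (4 * s).
  have -> : N%:R / (4 * s) = \sum_(i < N) (4 * s)^-1.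
    by rewrite sumr_const card_ord mulr_natl.
  rewrite mulr_sumr -big_split /=; apply: ler_sum => i _.
  rewrite -subr_ge0 (_ : _ - _ = s * (v i - (2 * s)^-1)^+2); last first.
    by field; rewrite gt_eqF.
  by apply: mulr_ge0; [exact: ltW | exact: sqr_ge0].
have CX : lp_cost (alg_x e delta alpha k) = lp_cost (xb e delta k) + \sum_i v i.
  by rewrite eX /lp_cost big_split.
have eAk : Ak R k = (k%:R + 1) * (k%:R + 1 + 1) / 4 by rewrite /Ak !natr1.
have e4s : N%:R / (4 * s) = N%:R / (2 * ((k%:R + 1) * (k%:R + 1 + 1) / 4 *
                  (delta / (2 * ((dmax e)%:R + 1) ^+ 2)))).
  rewrite /s eAk; congr (_ / _); rewrite /alphaD /D1; field.
  by rewrite natr1 pnatr_eq0.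
apply: (@arith R (lp_cost xs) N%:R _ delta ((dmax e)%:R + 1) (k%:R + 1)).
- exact: dpos.
- exact: (D1_ge1 R e).
- by rewrite lerDr ler0n.
- by rewrite /lp_cost; apply: sumr_ge0 => i _.
- exact: NB.
- rewrite CX -e4s.
  move: MB; rewrite -/s -/v => MB.
  lra.
Qed.
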